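(* Let $m\ge2$ and work either in the PNS or in the PNGS setting described in the context. Let $\mathbb S^m\supset p^{m-1}\supset\cdots\supset p^1\supset p^0$ be a family of backward nested subspheres, i.e. $p^{l}\in P_l$ for $l=0,\ldots,m-1$, $p^{m-1}\in S_{\mathbb S^m}$ and $p^{l-1}\in S_{p^l}$ for $l=1,\ldots,m-1$. Then for all $0\le j'<j\le m-1$, $$\pi_{p^j,p^{j'}}\circ\pi_{\mathbb S^m,p^j}=\pi_{\mathbb S^m,p^{j'}}$$ (at every point of $\mathbb S^m$ where these maps are defined).
   Context: Notation: $\|\cdot\|$ Euclidean/Frobenius norm; $O(k,n)=\{v\in\mathbb R^{n\times k}:v^Tv=I_k\}$; $O(k)$ orthogonal group; $\mathbb D^k$ open unit ball and $\mathbb S^{k-1}$ unit sphere in $\mathbb R^k$. For $j\in\{1,\ldots,m-1\}$, PNS: $M_j=\{\binom{v}{\alpha^T}: v\in O(m-j,m+1),\alpha\in\mathbb D^{m-j}\}$; PNGS: same with $\alpha=0$. For $j=0$: $M_0=\{\binom{v}{\alpha^T}: v\in O(m,m+1),\alpha\in\mathbb S^{m-1}\}$. $P_j=M_j/O(m-j)$ (right action $z\mapsto zR$), with orbits $[z]$. An element $[\binom{v}{\alpha^T}]\in P_j$, $j\ge1$, represents the $j$-dimensional subsphere $\{x\in\mathbb S^m: v^Tx=\alpha\}$, and for $j=0$ the point $v\alpha$. $P_m=\{\mathbb S^m\}$ and $S_{\mathbb S^m}=P_{m-1}$. Nesting: for $p=[\binom{v}{\alpha^T}]\in P_j$ with $2\le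 j\le m-1$, $S_p$ is the set of all $[\binom{v\ \ v_{m-j+1}}{\alpha^T\ \ \alpha_{m-j+1}}]$ with $v_{m-j+1}\in\mathbb S^m$, $v^Tv_{m-j+1}=0$ and $\alpha_{m-j+1}\in\mathbb R$, $\alpha_{m-j+1}^2<1-\|\alpha\|^2$ (PNS) resp. $\alpha_{m-j+1}=0$ (PNGS); for $j=1$ the same with the condition $\alpha_m^2=1-\|\alpha\|^2$ instead. Projection onto $p=[\binom{v}{\alpha^T}]\in P_j$ ($0\le j\le m-1$): $\pi_{\mathbb S^m,p}(q)=v\alpha+\sqrt{1-\|\alpha\|^2}\,\frac{(I_{m+1}-vv^T)q}{\|(I_{m+1}-vv^T)q\|}$, defined whenever $(I_{m+1}-vv^T)q\neq0$ and independent of the representative (for $j=0$ this is the constant $v\alpha$). The same definitions with $m$ replaced by any $j$ give subspheres and projections $\pi_{\mathbb S^j,\cdot}$ for $\mathbb S^j\subset\mathbb R^{j+1}$. For $p^j=[\binom{v}{\alpha^T}]\in P_j$ choose $\tilde v\in O(j+1,m+1)$ with $(v,\tilde v)\in O(m+1)$ and define $g_{p^j,\mathbb S^j}:p^j\to\mathbb S^j$, $y\mapsto \tilde v^Ty/\|\tilde v^Ty\|$, a bijection with inverse $z\mapsto v\alpha+\sqrt{1-\|\alpha\|^2}\,\tilde vz$. For a subsphere $p^{j'}\subset p^j$ of the nested family, $p'_{j'}:=g_{p^j,\mathbb S^j}(p^{j'})$ is a $j'$-dimensional subsphere of $\mathbb S^j$, and $\pi_{p^j,p^{j'}}:=g_{p^j,\mathbb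 S^j}^{-1}\circ\pi_{\mathbb S^j,p'_{j'}}\circ g_{p^j,\mathbb S^j}:p^j\to p^{j'}$ (independent of the choice of $\tilde v$). *)

(* Defs.v *)
From HB Require Import structures.
From mathcomp Require Import all_boot all_order all_algebra.
From mathcomp Require Import reals.
Set Implicit Arguments. Unset Strict Implicit. Unset Printing Implicit Defensive.
Import Order.TTheory GRing.Theory Num.Theory.
Local Open Scope ring_scope.

Inductive setting := PNS | PNGS.

Section Defs.
Variable R : realType.

Definition csq n (x : 'cV[R]_n) : R := \sum_(i < n) x i 0 ^+ 2.
Definition rsq n (a : 'rV[R]_n) : R := \sum_(i < n) a 0 i ^+ 2.
Definition cnorm n (x : 'cV[R]_n) : R := Num.sqrt (csq x).
Definition unitS n (x : 'cV[R]_n) := csq x = 1.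

(* A representative (v, alpha^T) for a subsphere of S^n in R^(n+1)
   cut out by k equations: v : (n+1) x k, alpha^T : 1 x k.
   Its dimension is j = n - k. *)
Definition Rep n k := ('M[R]_(n.+1, k) * 'rV[R]_k)%type.

Definition orthocols a b (v : 'M[R]_(a, b)) := v^T *m v = 1%:M.

(* z in M_j (j = n - k, so j = 0 iff k = n) *)
Definition inM (s : setting) n k (z : Rep n k) :=
  orthocols z.1 /\
  (if k == n then rsq z.2 = 1
   else match s with PNS => rsq z.2 < 1 | PNGS => z.2 = 0 end).

Definition orbit n k (z z' : Rep n k) :=
  exists Q : 'M[R]_k, orthocols Q /\ z' = (z.1 *m Q, z.2 *m Q).

(* An element of P_j, represented as the set of its representatives (an orbit) *)
Definition isP s n k (p : Rep n k -> Prop) :=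
  exists z, inM s z /\ forall z', p z' <-> orbit z z'.

Definition inS s n k (p : Rep n k -> Prop) (q : Rep n k.+1 -> Prop) :=
  exists z, p z /\ exists (v' : 'cV[R]_n.+1) (a : R),
    csq v' = 1 /\ z.1^T *m v' = 0 /\
    (if k.+1 == n then a ^+ 2 = 1 - rsq z.2
     else match s with PNS => a ^+ 2 < 1 - rsq z.2 | PNGS => a = 0 end) /\
    forall z', q z' <->
      orbit (castmx (erefl n.+1, addn1 k) (row_mx z.1 v'),
             castmx (erefl 1%N, addn1 k) (row_mx z.2 a%:M)) z'.

Definition subsph n k (z : Rep n k) (x : 'cV[R]_n.+1) :=
  if k == n then x = z.1 *m z.2^T
  else unitS x /\ z.1^T *m x = z.2^T.

Definition proj n k (z : Rep n k) (q : 'cV[R]_n.+1) : 'cV[R]_n.+1 :=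
  let r := q - z.1 *m z.1^T *m q in
  z.1 *m z.2^T + (Num.sqrt (1 - rsq z.2) / cnorm r) *: r.

Definition proj_def n k (z : Rep n k) (q : 'cV[R]_n.+1) :=
  k = n \/ q - z.1 *m z.1^T *m q != 0.

(* g_{p^j, S^j} for p^j = [z] in S^n (z : Rep n k, j = n - k), given vt = \tilde v *)
Definition gmap n k (vt : 'M[R]_(n.+1, (n - k).+1)) (y : 'cV[R]_n.+1)
  : 'cV[R]_(n - k).+1 :=
  (cnorm (vt^T *m y))^-1 *: (vt^T *m y).

Definition ginv n k (z : Rep n k) (vt : 'M[R]_(n.+1, (n - k).+1))
  (w : 'cV[R]_(n - k).+1) : 'cV[R]_n.+1 :=
  z.1 *m z.2^T + Num.sqrt (1 - rsq z.2) *: (vt *m w).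

End Defs.

(* Main.v *)
Require Import Defs.
From HB Require Import structures.
From mathcomp Require Import all_boot all_order all_algebra.
From mathcomp Require Import reals ring lra.
Import Order.TTheory GRing.Theory Num.Theory.
Local Open Scope ring_scope.
Set Implicit Arguments. Unset Strict Implicit.


Definition dot {R : realType} {n} (x y : 'cV[R]_n) : R := (x^T *m y) 0 0.

Lemma dotC {R : realType} n (x y : 'cV[R]_n) : dot x y = dot y x.
Proof.
rewrite /dot; have -> : x^T *m y = (y^T *m x)^T by rewrite trmx_mul trmxK.
by rewrite mxE.
Qed.

Lemma dotDl {R : realType} n (x y w : 'cV[R]_n) : dot (x + y) w = dot x w + dot y w.
Proof. by rewrite /dot linearD mulmxDl mxE. Qed.
Lemma dotZl {R : realType} n a (x w : 'cV[R]_n) : dot (a *: x) w = a * dot x w.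
Proof. by rewrite /dot linearZ /= -scalemxAl mxE. Qed.
Lemma dotBl {R : realType} n (x y w : 'cV[R]_n) : dot (x - y) w = dot x w - dot y w.
Proof. by rewrite dotDl -scaleN1r dotZl mulN1r. Qed.
Lemma dotDr {R : realType} n (x y w : 'cV[R]_n) : dot w (x + y) = dot w x + dot w y.
Proof. by rewrite dotC dotDl !(dotC w). Qed.
Lemma dotBr {R : realType} n (x y w : 'cV[R]_n) : dot w (x - y) = dot w x - dot w y.
Proof. by rewrite dotC dotBl !(dotC w). Qed.
Lemma dotZr {R : realType} n a (x w : 'cV[R]_n) : dot w (a *: x) = a * dot w x.
Proof. by rewrite dotC dotZl !(dotC w). Qed.
Lemma dot_mull {R : realType} n k (A : 'M[R]_(n, k)) x y : dot (A *m x) y = dot x (A^T *m y).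
Proof. by rewrite /dot trmx_mul mulmxA. Qed.
Lemma dot_mulr {R : realType} n k (A : 'M[R]_(n, k)) x y : dot y (A *m x) = dot (A^T *m y) x.
Proof. by rewrite dotC dot_mull dotC. Qed.
Lemma dot0r {R : realType} n (x : 'cV[R]_n) : dot 0 x = 0.
Proof. by rewrite /dot trmx0 mul0mx mxE. Qed.
Lemma dotr0 {R : realType} n (x : 'cV[R]_n) : dot x 0 = 0.
Proof. by rewrite dotC dot0r. Qed.

Lemma csq_dot {R : realType} n (x : 'cV[R]_n) : csq x = dot x x.
Proof. by rewrite /csq /dot mxE; apply: eq_bigr => i _; rewrite !mxE expr2. Qed.
Lemma rsq_dot {R : realType} n (a : 'rV[R]_n) : rsq a = dot a^T a^T.
Proof. by rewrite /rsq /dot mxE; apply: eq_bigr => i _; rewrite !mxE expr2. Qed.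
Lemma dot_ge0 {R : realType} n (x : 'cV[R]_n) : 0 <= dot x x.
Proof. by rewrite -csq_dot /csq; apply: sumr_ge0 => i _; apply: sqr_ge0. Qed.
Lemma dot_eq0 {R : realType} n (x : 'cV[R]_n) : dot x x = 0 -> x = 0.
Proof.
rewrite -csq_dot /csq => h; apply/matrixP => i j; rewrite mxE (ord1 j).
have hi : x i 0 ^+ 2 = 0.
  by apply: (psumr_eq0P _ h) => // l _; apply: sqr_ge0.
by move/eqP: hi; rewrite sqrf_eq0 => /eqP.
Qed.
Lemma dot_gt0 {R : realType} n (x : 'cV[R]_n) : x != 0 -> 0 < dot x x.
Proof.
move=> hx; rewrite lt0r dot_ge0 andbT; apply/eqP => /dot_eq0 h.
by rewrite h eqxx in hx.
Qed.
Lemma cnorm_sq {R : realType} n (x : 'cV[R]_n) : cnorm x ^+ 2 = dot x x.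
Proof. by rewrite /cnorm sqr_sqrtr csq_dot ?dot_ge0. Qed.
Lemma cnorm_gt0 {R : realType} n (x : 'cV[R]_n) : x != 0 -> 0 < cnorm x.
Proof. by move=> hx; rewrite /cnorm sqrtr_gt0 csq_dot dot_gt0. Qed.


Lemma projG {R : realType} n k (z : Rep R n k) q :
  orthocols z.1 -> (k == n -> rsq z.2 = 1) -> (k != n -> rsq z.2 < 1) ->
  proj_def z q ->
  [/\ subsph z (proj z q),
     forall x, subsph z x -> dot x q <= dot (proj z q) q &
     forall x, subsph z x -> dot (proj z q) q <= dot x q -> x = proj z q].
Proof.
move=> ho h1 h2 hd; case: (eqVneq k n) => hk.
  have r1 := h1 (introT eqP hk).
  have -> : proj z q = z.1 *m z.2^T.
    by rewrite /proj r1 subrr sqrtr0 mul0r scale0r addr0.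
  rewrite /subsph (introT eqP hk).
  by split => // x ->.
have hr : q - z.1 *m z.1^T *m q != 0.
  by case: hd => // e; rewrite e eqxx in hk.
have r2 := h2 hk.
rewrite /subsph (negbTE hk) /proj.
move: hr; set V := z.1; set g := z.2; set r := q - V *m V^T *m q => hr.
set rho := Num.sqrt (1 - rsq g); set N := cnorm r.
have VtV : V^T *m V = 1%:M := ho.
have Vr : V^T *m r = 0.
  by rewrite /r mulmxBr !mulmxA VtV mul1mx subrr.
have Npos : 0 < N by apply: cnorm_gt0.
have N2 : N ^+ 2 = dot r r by apply: cnorm_sq.
have rpos : 0 < rho by rewrite /rho sqrtr_gt0 subr_gt0.
have rho2 : rho ^+ 2 = 1 - rsq g by rewrite /rho sqr_sqrtr // subr_ge0 ltW.
set t := rho / N.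
have tpos : 0 < t by rewrite divr_gt0.
have t2 : 0 < 2 * t by rewrite mulr_gt0.
have tN : t * N = rho by rewrite /t mulrVK // unitfE gt_eqF.
have gg : dot (V *m g^T) (V *m g^T) = rsq g.
  by rewrite dot_mull mulmxA VtV mul1mx rsq_dot.
have gr : dot (V *m g^T) r = 0 by rewrite dot_mull Vr dotr0.
have rq : dot r q = dot r r.
  have -> : dot r q = dot r (r + V *m V^T *m q) by rewrite /r subrK.
  by rewrite dotDr -mulmxA dot_mulr Vr dot0r addr0.
have VtX : forall x : 'cV[R]_n.+1, V^T *m x = g^T -> V^T *m (x - V *m g^T) = 0.
  by move=> x hx; rewrite mulmxBr hx mulmxA VtV mul1mx subrr.
have key : forall x : 'cV[R]_n.+1, unitS x -> V^T *m x = g^T ->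
   [/\ dot x q = dot (V *m g^T) q + dot (x - V *m g^T) r,
       dot (x - V *m g^T) (x - V *m g^T) = rho ^+ 2 &
       dot (V *m g^T + t *: r) q = dot (V *m g^T) q + t * N ^+ 2].
  move=> x ux hx; split.
  - have -> : dot x q = dot (V *m g^T + (x - V *m g^T)) q by rewrite addrC subrK.
    rewrite [in LHS]dotDl; congr (_ + _).
    have -> : dot (x - V *m g^T) q = dot (x - V *m g^T) (r + V *m V^T *m q) by rewrite /r subrK.
    by rewrite dotDr -mulmxA dot_mulr VtX // dot0r addr0.
  - rewrite dotBl !dotBr gg (dotC x (V *m g^T)) !dot_mull hx -rsq_dot -csq_dot ux rho2.
    by ring.
  - by rewrite dotDl dotZl rq N2.
clearbody r.
split.
- rewrite /unitS csq_dot !dotDl !dotDr !dotZl !dotZr gg gr (dotC r) gr -N2.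
  split.
    have : rsq g + t * (t * N ^+ 2) = rsq g + rho ^+ 2 by rewrite -tN; ring.
    by rewrite mulr0 !add0r addr0 rho2 => ->; rewrite addrC subrK.
  by rewrite mulmxDr mulmxA VtV mul1mx linearZ /= Vr scaler0 addr0.
- move=> x [ux hx]; have [e1 e2 e3] := key x ux hx; have eE : x = V *m g^T + (x - V *m g^T) by rewrite addrC subrK.
  move: (x - V *m g^T) e1 e2 eE => e e1 e2 eE; rewrite e1 e3 lerD2l.
  have := dot_ge0 (e - t *: r).
  rewrite !dotBl !dotBr !dotZl !dotZr e2 (dotC r e) -N2 => h.
  have h' : 0 <= 2 * t * (t * N ^+ 2 - dot e r).
    apply: (le_trans h); rewrite le_eqVlt -tN; apply/orP; left; apply/eqP; ring.
  by rewrite -subr_ge0; move: h'; rewrite pmulr_rge0.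
- move=> x [ux hx]; have [e1 e2 e3] := key x ux hx; have eE : x = V *m g^T + (x - V *m g^T) by rewrite addrC subrK.
  move: (x - V *m g^T) e1 e2 eE => e e1 e2 eE; rewrite e1 e3 lerD2l => hle.
  have hge : dot e r <= t * N ^+ 2.
    have := dot_ge0 (e - t *: r).
    rewrite !dotBl !dotBr !dotZl !dotZr e2 (dotC r e) -N2 => h.
    have h' : 0 <= 2 * t * (t * N ^+ 2 - dot e r).
      apply: (le_trans h); rewrite le_eqVlt -tN; apply/orP; left; apply/eqP; ring.
    by rewrite -subr_ge0; move: h'; rewrite pmulr_rge0.
  have heq : dot e r = t * N ^+ 2 by apply/eqP; rewrite eq_le hge hle.
  have : dot (e - t *: r) (e - t *: r) = 0.
    rewrite !dotBl !dotBr !dotZl !dotZr e2 (dotC r e) -N2 heq -tN; ring.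
  by move/dot_eq0/eqP; rewrite subr_eq add0r => /eqP He; rewrite eE He.
Qed.


Lemma orth_sq {R : realType} n (Q : 'M[R]_n) : orthocols Q -> Q *m Q^T = 1%:M.
Proof. by move=> h; apply: mulmx1C. Qed.

Lemma subsph_orbit {R : realType} n k (z : Rep R n k) (Q : 'M[R]_k) x :
  orthocols Q -> subsph z x <-> subsph (z.1 *m Q, z.2 *m Q) x.
Proof.
move=> hQ; have QQ := orth_sq hQ; rewrite /subsph /=; case: ifP => _.
  by rewrite trmx_mul mulmxA -(mulmxA z.1) QQ mulmx1.
rewrite !trmx_mul; split => -[u h]; split => //.
  by rewrite -mulmxA h.
by rewrite -[z.1^T *m x]mul1mx -QQ -mulmxA (mulmxA Q^T) h mulmxA QQ mul1mx.
Qed.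

Lemma rsq_orth {R : realType} k (g : 'rV[R]_k) (Q : 'M[R]_k) :
  orthocols Q -> rsq (g *m Q) = rsq g.
Proof.
move=> hQ; rewrite !rsq_dot trmx_mul dot_mull trmxK mulmxA orth_sq //.
by rewrite mul1mx.
Qed.

Lemma orbit_inM {R : realType} s n k (z z' : Rep R n k) :
  Defs.orbit z z' -> inM s z -> inM s z'.
Proof.
move=> [Q [hQ ->]] [ho h]; split.
  by rewrite /orthocols /= trmx_mul -mulmxA (mulmxA z.1^T) ho mul1mx.
move: h => /=; case: ifP => _; first by rewrite rsq_orth.
by case: s => [|h]; [rewrite rsq_orth | rewrite h mul0mx].
Qed.

Lemma P_inM {R : realType} s n k (p : Rep R n k -> Prop) z :
  isP s p -> p z -> inM s z.
Proof. by move=> [c [hc hp]] /hp ho; apply: orbit_inM ho hc. Qed.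

Lemma P_subsph {R : realType} s n k (p : Rep R n k -> Prop) z z' x :
  isP s p -> p z -> p z' -> (subsph z x <-> subsph z' x).
Proof.
move=> [c [hc hp]] /hp [Q [hQ ->]] /hp [Q' [hQ' ->]].
by rewrite -!subsph_orbit.
Qed.

Lemma P_ex {R : realType} s n k (p : Rep R n k -> Prop) : isP s p -> exists z, p z.
Proof.
move=> [c [hc hp]]; exists c; apply/hp; exists 1%:M; split.
  by rewrite /orthocols trmx1 mulmx1.
by rewrite !mulmx1; case: c {hc hp}.
Qed.

Lemma ext_sub {R : realType} n k N (e : (k + 1 = N)%N) (z : Rep R n k)
  (v : 'cV[R]_n.+1) (a : R) x :
  orthocols z.1 -> z.1^T *m v = 0 -> csq v = 1 ->
  (N == n -> a ^+ 2 = 1 - rsq z.2) -> k != n ->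
  subsph (castmx (erefl n.+1, e) (row_mx z.1 v),
          castmx (erefl 1%N, e) (row_mx z.2 a%:M)) x -> subsph z x.
Proof.
case: N / e => ho hv hv1 ha hk; rewrite /subsph /= !castmx_id (negbTE hk).
case: ifP => hkn.
  rewrite tr_row_mx mul_row_col tr_scalar_mx mul_mx_scalar => ->.
  split; last by rewrite mulmxDr mulmxA ho mul1mx -scalemxAr hv scaler0 addr0.
  rewrite /unitS csq_dot !dotDl !dotDr !dotZl !dotZr dot_mull mulmxA ho mul1mx.
  rewrite -rsq_dot (dotC v) !dot_mull hv dotr0 -csq_dot hv1 !mulr0 !addr0 add0r mulr1; have := ha hkn; rewrite expr2 => ->; ring.
move=> [ux h]; split => //.
move: h; rewrite !tr_row_mx mul_col_mx => /eq_col_mx [-> _].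
by [].
Qed.


Lemma nest {R : realType} s m (p : forall k : nat, Rep R m k -> Prop) k :
  (1 <= k)%N -> (k < m)%N ->
  (forall k : nat, (1 <= k <= m)%N -> isP s (p k)) ->
  (forall k : nat, (1 <= k < m)%N -> inS s (p k) (p k.+1)) ->
  forall z, p k z -> forall j, (k <= j <= m)%N -> forall zj, p j zj ->
  forall x, subsph zj x -> subsph z x.
Proof.
move=> hk1 hkm hP hS z pz; elim => [|j IH].
  by rewrite leqn0 => /andP[/eqP k0]; rewrite k0 in hk1.
move=> /andP [hkj hjm] zj pzj x hx; case: (eqVneq k j.+1) => e.
  subst k; exact: (proj2 (P_subsph x (hP j.+1 (introT andP (conj hk1 hjm))) pz pzj) hx).

have hkj' : (k <= j)%N by rewrite -ltnS ltn_neqAle e hkj.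
have hj1 : (1 <= j)%N by apply: leq_trans hkj'.
have hjm' : (j < m)%N by [].
have [z0 [pz0 [v' [a [hv1 [hvz [ha hq]]]]]]] := hS j (introT andP (conj hj1 hjm')).
have [Q [hQ ezj]] := (hq zj).1 pzj.
rewrite ezj in hx; have {}hx := proj2 (subsph_orbit _ x hQ) hx.
have [ho0 _] := P_inM (hP j (introT andP (conj hj1 (ltnW hjm')))) pz0.
have ha' : (j.+1 == m)%N -> a ^+ 2 = 1 - rsq z0.2 by move=> h; move: ha; rewrite h.
have hx0 := ext_sub ho0 hvz hv1 ha' (negbT (ltn_eqF hjm')) hx.
by apply: (IH _ z0 pz0 x hx0); rewrite hkj' ltnW.
Qed.

Lemma sq_lemma {R : realType} n N (e : n.+1 = N) (A : 'M[R]_(n.+1, N)) :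
  A^T *m A = 1%:M -> A *m A^T = 1%:M.
Proof. by case: N / e A => A; apply: mulmx1C. Qed.

Lemma compl {R : realType} n k (V : 'M[R]_(n.+1, k)) (vt : 'M[R]_(n.+1, (n - k).+1)) :
  (k <= n)%N -> orthocols V -> orthocols vt -> V^T *m vt = 0 ->
  V *m V^T + vt *m vt^T = 1%:M.
Proof.
move=> hkn hV hvt h0.
have e : (n.+1 = k + (n - k).+1)%N by rewrite addnS subnKC.
have := @sq_lemma R n _ e (row_mx V vt).
rewrite tr_row_mx mul_col_row mul_row_col => -> //.
have -> : vt^T *m V = 0 by rewrite -[vt^T *m V]trmxK trmx_mul trmxK h0 trmx0.
by rewrite hV hvt h0 -scalar_mx_block.
Qed.

Unset Implicit Arguments. Set Strict Implicit.

Theorem proposition2p5 (R : realType) (s : setting) (m : nat)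
  (p : forall k : nat, Rep R m k -> Prop) :
  (2 <= m)%N ->
  (forall k : nat, (1 <= k <= m)%N -> isP s (p k)) ->
  (forall k : nat, (1 <= k < m)%N -> inS s (p k) (p k.+1)) ->
  forall k k' : nat, (1 <= k)%N -> (k < k')%N -> (k' <= m)%N ->
  forall (z : Rep R m k) (z2 : Rep R m k')
         (vt : 'M[R]_(m.+1, (m - k).+1)) (w : Rep R (m - k) (k' - k))
         (q : 'cV[R]_m.+1),
    p k z -> p k' z2 ->
    orthocols vt -> z.1^T *m vt = 0 ->
    inM PNS w ->
    (forall x, subsph w x <-> exists y, subsph z2 y /\ x = gmap (k:=k) vt y) ->
    unitS q ->
    proj_def z q -> proj_def w (gmap (k:=k) vt (proj z q)) -> proj_def z2 q ->
    ginv z vt (proj w (gmap (k:=k) vt (proj z q))) = proj z2 q.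
Proof.
move=> hm hP hS k k' hk1 hkk' hk'm z z2 vt w q pz pz2 hvt hzv hw hset uq hd1 hd2 hd3.
have hkm : (k < m)%N by apply: leq_trans hk'm.
have knm : (k != m)%N by rewrite ltn_eqF.
have [ho hz] := P_inM (hP k (introT andP (conj hk1 (ltnW hkm)))) pz.
have [ho2 hz2] := P_inM (hP k' (introT andP (conj (leq_trans hk1 (ltnW hkk')) hk'm))) pz2.
have rsq0 : forall n, rsq (0 : 'rV[R]_n) = 0.
  by move=> n; rewrite rsq_dot trmx0 dot0r.
have rz : rsq z.2 < 1.
  by move: hz; rewrite (negbTE knm); case: (s) => [//|->]; rewrite rsq0 ltr01.
have cmp := compl (ltnW hkm) ho hvt hzv.
set V := z.1 in ho hzv cmp *; set al := z.2 in rz *.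
set c := Num.sqrt (1 - rsq al).
have cpos : 0 < c by rewrite sqrtr_gt0 subr_gt0.
have decomp : forall y : 'cV[R]_m.+1, y = V *m (V^T *m y) + vt *m (vt^T *m y).
  by move=> y; rewrite !mulmxA -mulmxDl cmp mul1mx.
have vtV : vt^T *m V = 0 by rewrite -[vt^T *m V]trmxK trmx_mul trmxK hzv trmx0.
have subz : forall y, subsph z y -> unitS y /\ V^T *m y = al^T.
  by rewrite /subsph (negbTE knm).
have gm : forall y, subsph z y -> gmap (k:=k) vt y = c^-1 *: (vt^T *m y).
  move=> y /subz [uy hy]; rewrite /gmap; congr (_ *: _); congr (_^-1).
  rewrite /cnorm csq_dot dot_mull trmxK.
  have -> : vt *m (vt^T *m y) = y - V *m al^T by rewrite {2}(decomp y) hy addrC addKr.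
  by rewrite dotBr -csq_dot uy dot_mulr hy -rsq_dot.
have fact1 : forall y, subsph z y -> ginv z vt (gmap (k:=k) vt y) = y.
  move=> y hy; rewrite gm // /ginv -/V -/al -/c -scalemxAr scalerA mulfV ?gt_eqF //.
  by rewrite scale1r -(proj2 (subz y hy)) -decomp.
have fact2 : forall y, subsph z y ->
    dot y q = dot (V *m al^T) q + c * dot (gmap (k:=k) vt y) (vt^T *m q).
  move=> y hy; rewrite {1}(decomp y) (proj2 (subz y hy)) dotDl; congr (_ + _).
  by rewrite gm // dotZl dot_mull mulrA mulfV ?gt_eqF // mul1r.
have hr : q - V *m V^T *m q != 0.
  by case: hd1 => // e; rewrite e eqxx in knm.
have vtr : vt^T *m (q - V *m V^T *m q) = vt^T *m q.
  by rewrite mulmxBr !mulmxA vtV !mul0mx subr0.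
have vtq : vt^T *m q != 0.
  apply/negP => /eqP h; move: hr; rewrite {1}(decomp q) h mulmx0 addr0 mulmxA subrr.
  by rewrite eqxx.
set N := cnorm (q - V *m V^T *m q).
have Npos : 0 < N by apply: cnorm_gt0.
have vtp : vt^T *m proj z q = (c / N) *: (vt^T *m q).
  by rewrite /proj -/V -/al -/c mulmxDr mulmxA vtV mul0mx add0r -scalemxAr vtr.
set lam := (cnorm ((c / N) *: (vt^T *m q)))^-1 * (c / N).
have hu : forall x, dot x (gmap (k:=k) vt (proj z q)) = lam * dot x (vt^T *m q).
  by move=> x; rewrite /gmap vtp !dotZr mulrA.
have lampos : 0 < lam.
  rewrite mulr_gt0 ?divr_gt0 // invr_gt0 cnorm_gt0 // scaler_eq0 negb_or vtq andbT.
  by rewrite mulf_neq0 ?invr_eq0 ?gt_eqF.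
case: hw => how hw'.
have h1w : (k' - k == m - k)%N -> rsq w.2 = 1 by move=> e; move: hw'; rewrite e.
have h2w : (k' - k != m - k)%N -> rsq w.2 < 1 by move=> e; move: hw'; rewrite (negbTE e).
have h1z : (k' == m)%N -> rsq z2.2 = 1 by move=> e; move: hz2; rewrite e.
have h2z : (k' != m)%N -> rsq z2.2 < 1.
  by move=> e; move: hz2; rewrite (negbTE e); case: (s) => [//|->]; rewrite rsq0 ltr01.
have [wa wb _] := projG how h1w h2w hd2.
have [za _ zc] := projG ho2 h1z h2z hd3.
have [y0 [hy0 ex]] := (hset _).1 wa.
have hys : subsph w (gmap (k:=k) vt (proj z2 q)).
  by apply/hset; exists (proj z2 q).
have le1 := wb _ hys.
have nz := nest hk1 hkm hP hS pz (introT andP (conj (ltnW hkk') hk'm)) pz2.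
rewrite ex (fact1 _ (nz _ hy0)).
have hys0 := nz _ za.
apply: (zc y0 hy0).
rewrite (fact2 _ hys0) (fact2 _ (nz _ hy0)) lerD2l ler_pM2l // -(ler_pM2l lampos) -!hu.
by rewrite ex in le1.
Qed.
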